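(* For all $v,w\in(-1,+\infty)$, $$(\ln(1+v))^2+(\ln(1+w))^2\ge\frac12\Big(\ln\big(1+\sqrt{v^2+w^2}\big)\Big)^2.$$ *)

(* Defs.v *)
From Stdlib Require Import Reals.

(* Main.v *)
Require Import Defs.
From Stdlib Require Import Reals.
From Stdlib Require Import Lra Psatz.
Open Scope R_scope.

Lemma ln_le (a b : R) : 0 < a -> a <= b -> ln a <= ln b.
Proof.
  intros ha hab. destruct (Rle_lt_or_eq_dec a b hab) as [h|h].
  - left. apply ln_increasing; assumption.
  - subst; right; reflexivity.
Qed.

Lemma aux (x : R) : -1 < x -> 0 <= ln (1 + Rabs x) <= Rabs (ln (1 + x)).
Proof.
  intros hx.
  assert (H0 : 0 <= ln (1 + Rabs x)).
  { rewrite <- ln_1. apply ln_le; [lra|]. pose proof (Rabs_pos x); lra. }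
  split; [exact H0|].
  destruct (Rle_or_lt 0 x) as [Hp|Hn].
  - rewrite (Rabs_right x) by lra. rewrite Rabs_right; [lra|].
    apply Rle_ge. rewrite (Rabs_right x) in H0 by lra. exact H0.
  - rewrite (Rabs_left x) by lra.
    apply Rle_trans with (ln (/ (1 + x))).
    + apply ln_le; [lra|].
      apply Rmult_le_reg_r with (1 + x); [lra|].
      rewrite Rinv_l by lra. nra.
    + rewrite ln_Rinv by lra. rewrite <- Rabs_Ropp. apply Rle_abs.
Qed.

Theorem lemmaA1 (v w : R) (hv : -1 < v) (hw : -1 < w) :
  (ln (1 + v))^2 + (ln (1 + w))^2 >= / 2 * (ln (1 + sqrt (v^2 + w^2)))^2.
Proof.
  destruct (aux v hv) as [Av Bv].
  destruct (aux w hw) as [Aw Bw].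
  set (sq := sqrt (v^2 + w^2)).
  assert (Hs0 : 0 <= sq) by apply sqrt_pos.
  assert (Hs : sq <= Rabs v + Rabs w).
  { unfold sq. rewrite <- (sqrt_pow2 (Rabs v + Rabs w)).
    2: { pose proof (Rabs_pos v); pose proof (Rabs_pos w); lra. }
    apply sqrt_le_1_alt.
    pose proof (Rabs_pos v); pose proof (Rabs_pos w).
    pose proof (pow2_abs v); pose proof (pow2_abs w).
    nra. }
  assert (L0 : 0 <= ln (1 + sq)).
  { rewrite <- ln_1. apply ln_le; lra. }
  assert (L1 : ln (1 + sq) <= ln (1 + Rabs v) + ln (1 + Rabs w)).
  { rewrite <- ln_mult.
    - apply ln_le; [lra|]. pose proof (Rabs_pos v); pose proof (Rabs_pos w). nra.
    - pose proof (Rabs_pos v); lra.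
    - pose proof (Rabs_pos w); lra. }
  rewrite <- (pow2_abs (ln (1 + v))), <- (pow2_abs (ln (1 + w))).
  set (L := ln (1 + sq)) in *.
  set (A := Rabs (ln (1 + v))) in *. set (B := Rabs (ln (1 + w))) in *.
  assert (HL : L <= A + B) by lra.
  assert (HL2 : L ^ 2 <= (A + B) ^ 2).
  { simpl. rewrite !Rmult_1_r. apply Rmult_le_compat; lra. }
  assert (HAB : (A + B) ^ 2 <= 2 * (A ^ 2 + B ^ 2)).
  { pose proof (pow2_ge_0 (A - B)). simpl in *. lra. }
  apply Rle_ge. lra.
Qed.
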